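(* Let $r\ge1$, $G\subset\mathbb{Z}_2^r$ a subgroup with $1^r\in G$, $S_G$ as below, and $Z_G=\sum_{\mu\in\mathrm{IS}^{(r,r)}}\dim(S_G)_\mu\,\theta_\mu\in\mathbb{C}\mathrm{IS}^{(r,r)}$. Then $S^{\otimes 2r}(Z_G)=Z_G$.
   Context: $\mathbb{C}\mathrm{IS}$ has basis $\theta_0,\theta_{1/2},\theta_{1/16}$; $S:\mathbb{C}\mathrm{IS}\to\mathbb{C}\mathrm{IS}$ is linear with $S\theta_0=\frac12\theta_0+\frac12\theta_{1/2}+\frac1{\sqrt2}\theta_{1/16}$, $S\theta_{1/2}=\frac12\theta_0+\frac12\theta_{1/2}-\frac1{\sqrt2}\theta_{1/16}$, $S\theta_{1/16}=\frac1{\sqrt2}\theta_0-\frac1{\sqrt2}\theta_{1/2}$; $\mathbb{C}\mathrm{IS}^{(r,r)}=(\mathbb{C}\mathrm{IS})^{\otimes 2r}$ with basis $\theta_\mu=\theta_{\mu_1}\otimes\cdots\otimes\theta_{\mu_{2r}}$, $\mu\in\mathrm{IS}^{(r,r)}=\mathrm{IS}^{2r}$. Identify $\mathrm{IS}=\{0,\frac12,\frac1{16}\}$ with $\{(d,c)\in\mathbb{Z}_2^2:dc=0\}$ via $0\leftrightarrow(0,0)$, $\frac12\leftrightarrow(0,1)$, $\frac1{16}\leftrightarrow(1,0)$, and componentwise $\mathrm{IS}^{(r,r)}$ with pairs $(d,c)\in(\mathbb{Z}_2^{r+r})^2$, $dc=0$. For $c\in\mathbb{Z}_2^{r+r}$,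 $|c|_l,|c|_r$ are numbers of ones among first/last $r$ coordinates, $|c|=|c|_l-|c|_r$ (componentwise products), $d_\perp=1^{2r}+d$, $\mathbb{Z}_2^d=\{\alpha:d\alpha=\alpha\}$; $A^\perp=\{\beta:|\beta a|\in2\mathbb{Z}\ \forall a\in A\}$. Construction: $\Delta(g)=(g,g)$; $D_G=\Delta G$, $C_G=D_G^\perp$. $C^{\rm even}_{r,r}=\{\alpha:|\alpha|\in2\mathbb{Z}\}$ with ordered basis $(v_1,\dots,v_{2r-1})=(\Delta e_1,\dots,\Delta e_r,\tilde e_1-\tilde e_2,\dots,\tilde e_{r-1}-\tilde e_r)$, $\tilde e_i=(e_i,0)$; $\varepsilon$ bimultiplicative to $\{\pm1\}$ with $\varepsilon(v_i,v_i)=(-1)^{|v_i|/2}$, $\varepsilon(v_i,v_j)=1$ ($i<j$), $(-1)^{|v_iv_j|}$ ($i>j$). $\mathbb{C}[\hat C_G]$: basis $e_\alpha$ ($\alpha\in C_G$), $e_\alpha e_\beta=\varepsilon(\alpha,\beta)e_{\alpha+\beta}$. For $d\in\Delta\mathbb{Z}_2^r$, $\Delta^d=\mathbb{Z}_2^d\cap\Delta\mathbb{Z}_2^r$, with $\{e_\gamma\}_{\gamma\in\Delta^d}$ spanning a copy of $\mathbb{C}[\Delta^d]$. For $d\in D_G$, $A_G(d)=\mathbb{C}[\hat C_G]\otimes_{\mathbb{C}[\Delta^d]}\mathbb{C}t_d$ (trivial module); $S_G=\bigoplus_{d\in D_G}A_G(d)$ graded by putting $e_\alpha\cdot t_d$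 in degree $(d,d_\perp\alpha)$. *)

(* Defs.v *)
From HB Require Import structures.
From mathcomp Require Import all_boot all_order all_algebra all_field.
Set Implicit Arguments. Unset Strict Implicit. Unset Printing Implicit Defensive.
Import Order.TTheory GRing.Theory Num.Theory.
Local Open Scope ring_scope.

Inductive IS := IS0 | IShalf | IS16.

Definition IS_to (x : IS) : 'I_3 :=
  match x with IS0 => inord 0 | IShalf => inord 1 | IS16 => inord 2 end.
Definition IS_of (i : 'I_3) : IS :=
  match val i with 0 => IS0 | 1 => IShalf | _ => IS16 end.
Lemma IS_toK : cancel IS_to IS_of.
Proof. by case; rewrite /IS_of /= inordK. Qed.

HB.instance Definition _ := Equality.copy IS (can_type IS_toK).
HB.instance Definition _ := Choice.copy IS (can_type IS_toK).
HB.instance Definition _ := Countable.copy IS (can_type IS_toK).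
HB.instance Definition _ := Finite.copy IS (can_type IS_toK).

(* Matrix of S on C IS: Smat b a = coefficient of theta_b in S theta_a. *)
Definition Smat (b a : IS) : algC :=
  match a, b with
  | IS0, IS0 => 2^-1 | IS0, IShalf => 2^-1 | IS0, IS16 => (sqrtC 2)^-1
  | IShalf, IS0 => 2^-1 | IShalf, IShalf => 2^-1 | IShalf, IS16 => - (sqrtC 2)^-1
  | IS16, IS0 => (sqrtC 2)^-1 | IS16, IShalf => - (sqrtC 2)^-1 | IS16, IS16 => 0
  end.

(* Z_2^(r+r) as boolean vectors; the first r coordinates are the "left" ones. *)
Definition vec (r : nat) := {ffun 'I_(r + r) -> bool}.
Definition hvec (r : nat) := {ffun 'I_r -> bool}.

Definition vadd r (a b : vec r) : vec r := [ffun i => addb (a i) (b i)].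
Definition vmul r (a b : vec r) : vec r := [ffun i => a i && b i].
Definition vone r : vec r := [ffun _ => true].
Definition hadd r (a b : hvec r) : hvec r := [ffun i => addb (a i) (b i)].
Definition hzero r : hvec r := [ffun _ => false].
Definition hone r : hvec r := [ffun _ => true].

Definition wl r (a : vec r) : nat := #|[set i : 'I_r | a (lshift r i)]|.
Definition wr r (a : vec r) : nat := #|[set i : 'I_r | a (rshift r i)]|.
Definition absw r (a : vec r) : int := (wl a)%:Z - (wr a)%:Z.

Definition dperp r (d : vec r) : vec r := vadd (vone r) d.

Definition Delta r (g : hvec r) : vec r :=
  [ffun i => match split i with inl j => g j | inr j => g j end].

Definition perp r (A : {set vec r}) : {set vec r} :=
  [set b | [forall a in A, (2 %| absw (vmul b a))%Z]].

Definition DG r (G : {set hvec r}) : {set vec r} := (@Delta r) @: G.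
Definition CG r (G : {set hvec r}) : {set vec r} := perp (DG G).

Definition Ceven r : {set vec r} := [set a | (2 %| absw a)%Z].

(* ordered basis of C^even (0-indexed): v_i = Delta e_i for i < r,
   v_(r+k) = e~_k - e~_(k+1) for k < r-1 *)
Definition hunit r (k : nat) : hvec r := [ffun j : 'I_r => val j == k].
Definition tunit r (k : nat) : vec r := [ffun j : 'I_(r + r) => val j == k].
Definition vbas r (i : nat) : vec r :=
  if (i < r)%N then Delta (hunit r i) else vadd (tunit r (i - r)) (tunit r (i - r).+1).

(* Z_2^d intersected with Delta Z_2^r *)
Definition Deltad r (d : vec r) : {set vec r} :=
  [set g in [set Delta h | h : hvec r] | vmul d g == g].

(* ambient space C[Z_2^(r+r)] containing C[hat C_G] *)
Definition amb r := {ffun vec r -> algC^o}.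
Definition ebas r (a : vec r) : amb r := [ffun x => (x == a)%:R].

(* Kernel of C[hat C_G] ->> C[hat C_G] (x)_{C[Delta^d]} C t_d :
   spanned by x.e_gamma - x (gamma in Delta^d), x = e_alpha, alpha in C_G,
   with e_alpha e_gamma = eps(alpha,gamma) e_(alpha+gamma). *)
Definition kerA r (G : {set hvec r}) (eps : vec r -> vec r -> algC) (d : vec r)
  : {vspace amb r} :=
  <<[seq eps a g *: ebas (vadd a g) - ebas a
      | a <- enum (CG G), g <- enum (Deltad d)]>>%VS.

(* IS^(r,r) identified with pairs (d, c), dc = 0 *)
Definition muD r (mu : {ffun 'I_(r + r) -> IS}) : vec r := [ffun i => mu i == IS16].
Definition muC r (mu : {ffun 'I_(r + r) -> IS}) : vec r := [ffun i => mu i == IShalf].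

(* dim A_G(d)_mu : the image in A_G(d) of the span of the e_alpha (alpha in C_G)
   of degree (d, d_perp alpha) = mu *)
Definition dimA r (G : {set hvec r}) (eps : vec r -> vec r -> algC) (d : vec r)
  (mu : {ffun 'I_(r + r) -> IS}) : nat :=
  (\dim (<<[seq ebas a | a <- enum (CG G)
             & ((d == muD mu) && (vmul (dperp d) a == muC mu))]>> + kerA G eps d)%VS
   - \dim (kerA G eps d))%N.

(* dim (S_G)_mu, S_G = (+)_{d in D_G} A_G(d) *)
Definition dimS r (G : {set hvec r}) (eps : vec r -> vec r -> algC)
  (mu : {ffun 'I_(r + r) -> IS}) : nat :=
  (\sum_(d in DG G) dimA G eps d mu)%N.

Definition ZG r (G : {set hvec r}) (eps : vec r -> vec r -> algC)
  : {ffun {ffun 'I_(r + r) -> IS} -> algC} :=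
  [ffun mu => (dimS G eps mu)%:R].

Definition Stens r (Z : {ffun {ffun 'I_(r + r) -> IS} -> algC})
  : {ffun {ffun 'I_(r + r) -> IS} -> algC} :=
  [ffun nu : {ffun 'I_(r + r) -> IS} => \sum_(mu : {ffun 'I_(r + r) -> IS})
                 (\prod_(k : 'I_(r + r)) Smat (nu k) (mu k)) * Z mu].

Definition eps_spec r (eps : vec r -> vec r -> algC) : Prop :=
  (forall a a' b, a \in Ceven r -> a' \in Ceven r -> b \in Ceven r ->
         eps (vadd a a') b = eps a b * eps a' b) /\
      (forall a b b', a \in Ceven r -> b \in Ceven r -> b' \in Ceven r ->
         eps a (vadd b b') = eps a b * eps a b') /\
      (forall a b, a \in Ceven r -> b \in Ceven r ->
         (eps a b = 1 \/ eps a b = -1)) /\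
      (forall i, (i < (r + r).-1)%N ->
         eps (vbas r i) (vbas r i) = (-1) ^ (absw (vbas r i) %/ 2)%Z) /\
      (forall i j, (i < j)%N -> (j < (r + r).-1)%N ->
         eps (vbas r i) (vbas r j) = 1) /\
      (forall i j, (j < i)%N -> (i < (r + r).-1)%N ->
         eps (vbas r i) (vbas r j) = (-1) ^ absw (vmul (vbas r i) (vbas r j))).

(* Main.v *)
Require Import Defs.
From HB Require Import structures.
From mathcomp Require Import all_boot all_order all_algebra all_field.
From mathcomp Require Import zify ring.
Set Implicit Arguments. Unset Strict Implicit. Unset Printing Implicit Defensive.
Import Order.TTheory GRing.Theory Num.Theory.
Local Open Scope ring_scope.

Section Basics.
Variable r : nat.
Implicit Types (a b x y : vec r) (g h : hvec r).

Definition vzero : vec r := [ffun _ => false].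

Lemma vaddC a b : vadd a b = vadd b a.
Proof. by apply/ffunP=> k; rewrite !ffunE addbC. Qed.
Lemma vaddA a b x : vadd a (vadd b x) = vadd (vadd a b) x.
Proof. by apply/ffunP=> k; rewrite !ffunE addbA. Qed.
Lemma vaddvv a : vadd a a = vzero.
Proof. by apply/ffunP=> k; rewrite !ffunE addbb. Qed.
Lemma vadd0v a : vadd vzero a = a.
Proof. by apply/ffunP=> k; rewrite !ffunE. Qed.
Lemma vaddv0 a : vadd a vzero = a.
Proof. by rewrite vaddC vadd0v. Qed.
Lemma vaddKv a b : vadd a (vadd a b) = b.
Proof. by rewrite vaddA vaddvv vadd0v. Qed.

Lemma DeltaE g k : Delta g k = match split k with inl j => g j | inr j => g j end.
Proof. by rewrite ffunE. Qed.
Lemma Delta_l g i : Delta g (lshift r i) = g i.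
Proof. by rewrite DeltaE (unsplitK (inl i)). Qed.
Lemma Delta_r g i : Delta g (rshift r i) = g i.
Proof. by rewrite DeltaE (unsplitK (inr i)). Qed.

Lemma Delta_inj : injective (@Delta r).
Proof. by move=> g h E; apply/ffunP=> i; rewrite -Delta_l E Delta_l. Qed.

Lemma Delta_add g h : Delta (hadd g h) = vadd (Delta g) (Delta h).
Proof. by apply/ffunP=> k; rewrite !ffunE; case: split => j; rewrite ffunE. Qed.

Lemma Delta0 : Delta (hzero r) = vzero.
Proof. by apply/ffunP=> k; rewrite !ffunE; case: split => j; rewrite ffunE. Qed.

Lemma Delta1 : Delta (hone r) = vone r.
Proof. by apply/ffunP=> k; rewrite !ffunE; case: split => j; rewrite ffunE. Qed.

Definition chi a b : algC := \prod_k (if a k && b k then -1 else 1).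

Lemma chiE a b : chi a b = (-1) ^+ #|[set k | a k && b k]|.
Proof.
rewrite /chi -prodr_const [RHS]big_mkcond /=; apply: eq_bigr => k _.
by rewrite inE.
Qed.

Lemma chiC a b : chi a b = chi b a.
Proof. by apply: eq_bigr => k _; rewrite andbC. Qed.

Lemma chiDl a a' b : chi (vadd a a') b = chi a b * chi a' b.
Proof.
rewrite /chi -big_split /=; apply: eq_bigr => k _; rewrite ffunE.
by case: (a k); case: (a' k); case: (b k); rewrite ?mulr1 ?mul1r ?mulrNN ?mulr1.
Qed.

Lemma chiDr a b b' : chi a (vadd b b') = chi a b * chi a b'.
Proof. by rewrite chiC chiDl !(chiC a). Qed.

Lemma chi_sq a b : chi a b * chi a b = 1.
Proof. by rewrite -chiDl vaddvv /chi big1 // => k _; rewrite ffunE. Qed.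

Lemma chi_pm a b : chi a b = 1 \/ chi a b = -1.
Proof. rewrite chiE -signr_odd; case: odd; [right|left]; by rewrite ?expr1 ?expr0. Qed.

Lemma chiDD g h : chi (Delta g) (Delta h) = 1.
Proof.
rewrite /chi big_split_ord /= -big_split /= big1 // => i _.
by rewrite !Delta_l !Delta_r; case: (_ && _); rewrite ?mulrNN ?mulr1.
Qed.

Lemma card_lr a : #|[set k | a k]| = (wl a + wr a)%N.
Proof.
rewrite /wl /wr -!sum1dep_card big_split_ord /=.
by congr (_ + _)%N; apply: eq_bigl => i; rewrite !inE.
Qed.

Lemma dvd2_sub (m n : nat) : (2 %| (m%:Z - n%:Z))%Z = ~~ odd (m + n).
Proof.
case: (leqP n m) => H.
  rewrite subzn // dvdzE absz_nat /= dvdn2 oddB //= oddD.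
  by case: (odd m); case: (odd n).
rewrite -opprB subzn ?(ltnW H) // dvdzE abszN absz_nat /= dvdn2 oddB ?(ltnW H) // oddD.
by case: (odd m); case: (odd n).
Qed.

Lemma even_absw a b : (2 %| absw (vmul a b))%Z = (chi a b == 1).
Proof.
rewrite /absw dvd2_sub -card_lr chiE -signr_odd.
have -> : [set k | vmul a b k] = [set k | a k && b k].
  by apply/setP=> k; rewrite !inE ffunE.
case: odd; rewrite ?expr0 ?eqxx //= expr1.
apply/esym/negbTE; rewrite -subr_eq0 -opprD oppr_eq0.
by rewrite (_ : 1 + 1 = 2%:R) // pnatr_eq0.
Qed.

Lemma vmul1 a : vmul a (vone r) = a.
Proof. by apply/ffunP=> k; rewrite !ffunE andbT. Qed.

Lemma Ceven_chi a : (a \in Ceven r) = (chi a (vone r) == 1).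
Proof. by rewrite inE -even_absw vmul1. Qed.

Lemma Delta_even g : Delta g \in Ceven r.
Proof. by rewrite Ceven_chi -Delta1 chiDD. Qed.

End Basics.

Section Two.
Variable r : nat.
Implicit Types (a b x y : vec r) (g h : hvec r).

Lemma haddK g h : hadd (hadd g h) h = g.
Proof. by apply/ffunP=> i; rewrite !ffunE -addbA addbb addbF. Qed.

Lemma hvec_ind (P : hvec r -> Prop) :
  P (hzero r) -> (forall h (i : 'I_r), P h -> P (hadd h (hunit r i))) ->
  forall h, P h.
Proof.
move=> P0 PS h; move: {2}#|[set i | h i]| (erefl #|[set i | h i]|) => n.
elim: n h => [|n IH] h Hn.
  have -> : h = hzero r; last by [].
  apply/ffunP=> i; rewrite ffunE; apply/negP=> hi.
  by move/eqP: Hn; rewrite cards_eq0 => /eqP/setP/(_ i); rewrite !inE hi.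
have [i hi] : exists i, h i.
  case: (pickP (fun i => h i)) => [i hi|H]; first by exists i.
  by move: Hn; rewrite (_ : [set i | h i] = set0) ?cards0 // ; apply/setP=> j; rewrite !inE H.
rewrite -(haddK h (hunit r i)); apply: PS; apply: IH.
have -> : [set j | hadd h (hunit r i) j] = [set j | h j] :\ i.
  apply/setP=> j; rewrite !inE !ffunE.
  case: (eqVneq j i) => [->|nji]; first by rewrite eqxx hi.
  by rewrite (_ : (val j == val i) = false) ?addbF //; apply/negbTE; rewrite val_eqE.
by rewrite (cardsD1 i) inE hi in Hn; case: Hn.
Qed.

Variable G : {set hvec r}.

Lemma CG_chi a : (a \in CG G) = [forall g in G, chi a (Delta g) == 1].
Proof.
rewrite inE; apply/forall_inP/forall_inP => H.
  by move=> g gG; rewrite -even_absw; apply: H; apply: imset_f.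
by move=> x /imsetP [g gG ->]; rewrite even_absw; apply: H.
Qed.

Lemma CG_add a b : a \in CG G -> b \in CG G -> vadd a b \in CG G.
Proof.
rewrite !CG_chi => /forall_inP Ha /forall_inP Hb; apply/forall_inP => g gG.
by rewrite chiDl (eqP (Ha g gG)) (eqP (Hb g gG)) mulr1.
Qed.

Lemma Delta_CG h : Delta h \in CG G.
Proof. by rewrite CG_chi; apply/forall_inP => g _; rewrite chiDD. Qed.

Lemma CG_even a : hone r \in G -> a \in CG G -> a \in Ceven r.
Proof.
by move=> H1; rewrite CG_chi Ceven_chi -Delta1 => /forall_inP; apply.
Qed.

End Two.

Section Eps.
Variable r : nat.
Implicit Types (a b x y : vec r) (g h : hvec r).
Variable eps : vec r -> vec r -> algC.
Hypothesis Heps : eps_spec eps.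
Hypothesis r0 : (0 < r)%N.

Lemma eq_pm1 (e : algC) : e = 1 \/ e = -1 -> e * e = e -> e = 1.
Proof.
case=> -> //; rewrite mulrNN mulr1 => /eqP.
by rewrite -subr_eq0 opprK (_ : 1 + 1 = 2%:R) // pnatr_eq0.
Qed.

Lemma vzero_even : vzero r \in Ceven r.
Proof. by rewrite -Delta0 Delta_even. Qed.

Lemma eps_x0 x : x \in Ceven r -> eps x (vzero r) = 1.
Proof.
case: Heps => _ [H2 [H3 _]] xe.
apply: eq_pm1; first exact: H3 (vzero_even).
by rewrite -H2 ?vzero_even // vaddvv.
Qed.

Lemma eps_0x x : x \in Ceven r -> eps (vzero r) x = 1.
Proof.
case: Heps => H1 [_ [H3 _]] xe.
apply: eq_pm1; first exact: H3 (vzero_even) xe.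
by rewrite -H1 ?vzero_even // vaddvv.
Qed.

Lemma eps_sq a b : a \in Ceven r -> b \in Ceven r -> eps a b * eps a b = 1.
Proof.
case: Heps => _ [_ [H3 _]] ae be.
by case: (H3 a b ae be) => ->; rewrite ?mulrNN mulr1.
Qed.

Lemma vbas_l (i : 'I_r) : vbas r i = Delta (hunit r i).
Proof. by rewrite /vbas ltn_ord. Qed.

Lemma absw_Delta g : absw (Delta g) = 0.
Proof.
rewrite /absw /wl /wr.
have -> : [set i | Delta g (rshift r i)] = [set i | Delta g (lshift r i)].
  by apply/setP=> i; rewrite !inE Delta_l Delta_r.
by rewrite subrr.
Qed.

Lemma vmul_Delta g h : vmul (Delta g) (Delta h) = Delta [ffun i => g i && h i].
Proof.
by apply/ffunP=> k; rewrite !ffunE; case: split => j; rewrite ffunE.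
Qed.

Lemma eps_bas (i j : 'I_r) : eps (vbas r i) (vbas r j) = 1.
Proof.
case: Heps => _ [_ [_ [H4 [H5 H6]]]].
have lr k : (k < r)%N -> (k < (r + r).-1)%N.
  by move=> H; apply: (leq_trans H); rewrite -subn1; lia.
case: (ltngtP i j) => [ij|ji|/val_inj ->].
- by apply: H5 => //; apply: lr.
- by rewrite H6 // ?lr // !vbas_l vmul_Delta absw_Delta.
- by rewrite H4 ?lr // vbas_l absw_Delta.
Qed.

Lemma eps_Db h (j : 'I_r) : eps (Delta h) (vbas r j) = 1.
Proof.
elim/hvec_ind: h => [|h i IH]; first by rewrite Delta0 eps_0x // vbas_l Delta_even.
case: Heps => H1 _.
rewrite Delta_add H1 ?Delta_even //; last by rewrite vbas_l Delta_even.
by rewrite IH -vbas_l eps_bas mulr1.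
Qed.

Lemma eps_DD h h' : eps (Delta h) (Delta h') = 1.
Proof.
elim/hvec_ind: h' => [|h' i IH]; first by rewrite Delta0 eps_x0 // Delta_even.
case: Heps => _ [H2 _].
by rewrite Delta_add H2 ?Delta_even // IH -vbas_l eps_Db mulr1.
Qed.

End Eps.

Section Lin.
Variable r : nat.

Definition lam (w : vec r -> algC) (v : amb r) : algC := \sum_y w y * v y.

Lemma lamB w (c : algC) (u v : amb r) : lam w (c *: u - v) = c * lam w u - lam w v.
Proof.
rewrite /lam mulr_sumr -sumrB; apply: eq_bigr => y _.
rewrite !ffunE /=; rewrite mulrBr; congr (_ - _).
by rewrite mulrCA.
Qed.

Lemma lam_ebas w x : lam w (ebas x) = w x.
Proof.
rewrite /lam (bigD1 x) //= big1 ?addr0 => [|y yx]; rewrite ffunE.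
  by rewrite eqxx mulr1.
by rewrite (negbTE yx) mulr0.
Qed.

Lemma lam_span w (X : seq (amb r)) v :
  (forall x, x \in X -> lam w x = 0) -> v \in <<X>>%VS -> lam w v = 0.
Proof.
move=> HX /(@coord_span _ _ _ (in_tuple X)) ->.
rewrite /lam.
under eq_bigr => y _ do rewrite sum_ffunE mulr_sumr.
rewrite exchange_big /= big1 // => i _.
have := HX (X`_i) (mem_nth 0 (ltn_ord i)); rewrite /lam => E.
transitivity (coord (in_tuple X) i v * \sum_y w y * X`_i y); last by rewrite E mulr0.
by rewrite mulr_sumr; apply: eq_bigr => y _; rewrite ffunE /= mulrCA.
Qed.

Lemma lam_delta x (v : amb r) : lam (fun y => (y == x)%:R) v = v x.
Proof.
rewrite /lam (bigD1 x) //= big1 ?addr0 => [|y yx]; first by rewrite eqxx mul1r.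
by rewrite (negbTE yx) mul0r.
Qed.

End Lin.

Section Dim.
Variable r : nat.
Variable G : {set hvec r}.
Variable eps : vec r -> vec r -> algC.
Hypothesis Heps : eps_spec eps.
Hypothesis r0 : (0 < r)%N.
Hypothesis G1 : hone r \in G.
Variable g : hvec r.
Variable nu : {ffun 'I_(r + r) -> IS}.

Local Notation d := (Delta g).
Local Notation H := (Deltad d).

Definition cond (a : vec r) := (d == muD nu) && (vmul (dperp d) a == muC nu).
Definition repc (a : vec r) := [forall i, g i ==> ~~ a (lshift r i)].
Definition Rset := [set a in CG G | cond a && repc a].

Lemma memH x : x \in H -> exists2 h : hvec r, x = Delta h & forall i, h i -> g i.
Proof.
rewrite inE => /andP [/imsetP [h _ ->] /eqP E]; exists h => // i hi.
by move/ffunP: E => /(_ (lshift r i)); rewrite ffunE !Delta_l hi andbT.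
Qed.

Lemma memH' (h : hvec r) : (forall i, h i -> g i) -> Delta h \in H.
Proof.
move=> Hh; rewrite inE imset_f //=; apply/eqP/ffunP=> k.
rewrite !ffunE; case: split => i; rewrite ?ffunE; case: (boolP (h i)) => hi;
  by rewrite ?andbT ?andbF ?Hh.
Qed.

Lemma H_CG x : x \in H -> x \in CG G.
Proof. by case/memH=> h -> _; apply: Delta_CG. Qed.

Lemma H_even x : x \in H -> x \in Ceven r.
Proof. by move/H_CG; apply: CG_even. Qed.

Lemma H_add x y : x \in H -> y \in H -> vadd x y \in H.
Proof.
case/memH=> h -> Hh; case/memH=> h' -> Hh'; rewrite -Delta_add; apply: memH' => i.
rewrite ffunE; case: (boolP (h i)) => hi /=; [by rewrite Hh | by move/Hh'].
Qed.

Lemma H0 : vzero r \in H.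
Proof. by rewrite -Delta0; apply: memH' => i; rewrite ffunE. Qed.

Definition hr (a : vec r) : hvec r := [ffun i => g i && a (lshift r i)].
Definition rep (a : vec r) := vadd a (Delta (hr a)).

Lemma hr_H a : Delta (hr a) \in H.
Proof. by apply: memH' => i; rewrite ffunE => /andP []. Qed.

Lemma rep_R a : a \in CG G -> cond a -> rep a \in Rset.
Proof.
move=> aC; rewrite /cond => /andP [E1 E2].
rewrite inE CG_add ?Delta_CG //= /cond E1 /=; apply/andP; split.
  rewrite -(eqP E2); apply/eqP/ffunP=> k; rewrite !ffunE.
  case: split => i; rewrite ffunE; case: (g i) => //=; by rewrite addbF.
apply/forallP=> i; rewrite !ffunE (unsplitK (inl i)) ffunE.
by case: (g i) => //=; case: (a _).
Qed.

Lemma R_uniq y b : y \in Rset -> b \in Rset -> vadd y b \in H -> y = b.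
Proof.
move=> + + /memH [h E Hh].
rewrite !inE => /andP [_ /andP [_ /forallP Ry]] /andP [_ /andP [_ /forallP Rb]].
have h0 : h = hzero r.
  apply/ffunP=> i; rewrite ffunE; apply/negP => hi.
  move/ffunP: E => /(_ (lshift r i)); rewrite ffunE Delta_l hi.
  have := Ry i; have := Rb i; rewrite (Hh i hi) /= => /negbTE -> /negbTE ->.
  by [].
by rewrite -(vaddKv y b) E h0 Delta0 vaddv0.
Qed.

Local Notation K := (kerA G eps d).
Definition VR := <<[seq ebas b | b <- enum Rset]>>%VS.
Definition W := <<[seq ebas a | a <- enum (CG G) & cond a]>>%VS.

Lemma VR_supp v x : v \in VR -> x \notin Rset -> v x = 0.
Proof.
move=> vV xR; rewrite -lam_delta; apply: (lam_span _ vV) => u /mapP [b].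
by rewrite mem_enum => bR ->; rewrite lam_ebas; case: eqP => // E; move: xR; rewrite -E bR.
Qed.

Definition wb (b : vec r) (y : vec r) : algC := (vadd y b \in H)%:R * eps b (vadd y b).

Lemma K_lam b v : b \in CG G -> v \in K -> lam (wb b) v = 0.
Proof.
move=> bC vK; apply: (lam_span _ vK) => u /allpairsP [[a ga] [/= aC gH ->]].
rewrite mem_enum in aC; rewrite mem_enum in gH.
rewrite lamB !lam_ebas /wb.
have be := CG_even G1 bC; have ae := CG_even G1 aC; have ge := H_even gH.
case: (boolP (vadd a b \in H)) => abH.
  have abgH : vadd (vadd a ga) b \in H.
    by rewrite -vaddA (vaddC ga) vaddA H_add.
  rewrite abgH !mul1r.
  case/memH: (abH) => h1 E1 _; case/memH: (gH) => h2 E2 _.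
  have Ea : a = vadd b (Delta h1) by rewrite -E1 (vaddC a) vaddKv.
  have -> : vadd (vadd a ga) b = vadd (Delta h1) ga.
    by rewrite -E1 -!vaddA (vaddC ga).
  rewrite E1 Ea E2.
  case: Heps => H1 [H2 _].
  rewrite H1 ?Delta_even // H2 ?Delta_even // -E2.
  have e1 : eps (Delta h1) ga = 1 by rewrite E2 (eps_DD Heps).
  by rewrite e1 mulr1 mulrCA (eps_sq Heps) ?mulr1 ?subrr.
have abgH : vadd (vadd a ga) b \in H = false.
  apply/negbTE; apply: contra abH => E.
  have -> : vadd a b = vadd ga (vadd (vadd a ga) b).
    by apply/ffunP => k; rewrite !ffunE; case: (a k); case: (ga k); case: (b k).
  exact: H_add.
by rewrite abgH !mul0r mulr0 subrr.
Qed.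

Lemma VR_K : (VR :&: K = 0)%VS.
Proof.
apply/eqP; rewrite -subv0; apply/subvP => v; rewrite memv_cap memv0 => /andP [vV vK].
apply/eqP/ffunP => x; rewrite ffunE.
case: (boolP (x \in Rset)) => xR; last exact: VR_supp.
have xC : x \in CG G by move: xR; rewrite inE => /andP [].
have := K_lam xC vK; rewrite /lam (bigD1 x) //= big1 ?addr0.
  by rewrite /wb vaddvv H0 mul1r eps_x0 ?mul1r // (CG_even G1 xC).
move=> y yx; case: (boolP (y \in Rset)) => yR; last by rewrite (VR_supp vV yR) mulr0.
rewrite /wb; case: (boolP (vadd y x \in H)) => yxH; last by rewrite !mul0r.
by rewrite (R_uniq yR xR yxH) eqxx in yx.
Qed.


Lemma VR_W : (VR <= W)%VS.
Proof.
apply/span_subvP => u /mapP [b]; rewrite mem_enum => bR ->.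
apply: memv_span; apply: map_f; rewrite mem_filter mem_enum.
by move: bR; rewrite inE => /andP [-> /andP [-> _]].
Qed.

Lemma W_VRK : (W <= VR + K)%VS.
Proof.
apply/span_subvP => u /mapP [a]; rewrite mem_filter mem_enum => /andP [ca aC] ->.
set ga := Delta (hr a).
have kK : eps a ga *: ebas (vadd a ga) - ebas a \in K.
  apply: memv_span; apply/allpairsP; exists (a, ga); split => //=; rewrite mem_enum //.
  exact: hr_H.
have -> : ebas a = eps a ga *: ebas (vadd a ga) + - (eps a ga *: ebas (vadd a ga) - ebas a).
  by rewrite opprB addrC subrK.
apply: memv_add; last by rewrite memvN.
apply: memvZ; apply: memv_span; apply: map_f; rewrite mem_enum.
exact: rep_R.
Qed.

Lemma dim_VR : \dim VR = #|Rset|.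
Proof.
have Hf : free [seq ebas b | b <- enum Rset].
  apply/freeP => k Hk i.
  set e := enum Rset.
  have ie : (i < size e)%N by move: (ltn_ord i); rewrite /e -cardE.
  move/ffunP: Hk => /(_ (nth (vzero r) e i)).
  rewrite sum_ffunE ffunE (bigD1 i) //= big1 ?addr0.
    by rewrite ffunE (nth_map (vzero r)) // ffunE eqxx => H; rewrite -[k i]mulr1.
  move=> j ji; rewrite ffunE (nth_map (vzero r)); last by move: (ltn_ord j); rewrite /e -cardE.
  rewrite ffunE nth_uniq ?enum_uniq //; last by move: (ltn_ord j); rewrite /e -cardE.
  by move: ji; rewrite -val_eqE eq_sym => /negbTE ->; rewrite scaler0.
by rewrite /VR (eqP Hf) size_map -cardE.
Qed.

Lemma dimA_eq : dimA G eps (Delta g) nu = #|Rset|.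
Proof.
rewrite /dimA.
have E : (W + K = VR + K)%VS.
  apply: subv_anti; apply/andP; split.
    by rewrite subv_add W_VRK addvSr.
  by rewrite subv_add addvSr andbT (subv_trans VR_W) // addvSl.
change ((\dim (W + K)%VS - \dim K)%N = #|Rset|).
by rewrite E dimv_disjoint_sum ?VR_K // addnK dim_VR.
Qed.

End Dim.

Section Char.
Variable r : nat.
Variable G : {set hvec r}.
Hypothesis G0 : hzero r \in G.
Hypothesis Gadd : forall g h, g \in G -> h \in G -> hadd g h \in G.

Lemma Gcard : #|G|%:R != 0 :> algC.
Proof. by rewrite pnatr_eq0 -lt0n card_gt0; apply/set0Pn; exists (hzero r). Qed.

Lemma charsum a : (a \in CG G)%:R = #|G|%:R^-1 * \sum_(h in G) chi a (Delta h).
Proof.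
apply: (mulfI Gcard); rewrite mulrA mulfV ?Gcard // mul1r.
case: (boolP (a \in CG G)) => aC.
  rewrite mulr1 -sumr_const; apply: eq_bigr => h hG.
  by move: aC; rewrite CG_chi => /forall_inP /(_ h hG) /eqP ->.
rewrite mulr0; move: aC; rewrite CG_chi => /forall_inPn [h0 h0G ch0].
have Ec : chi a (Delta h0) = -1.
  by case: (chi_pm a (Delta h0)) => // E; rewrite E eqxx in ch0.
set S := \sum_(h in G) _.
have ES : S = - S.
  rewrite /S [LHS](@reindex_inj _ _ _ _ (fun x => hadd x h0)) /=; last exact: (@can_inj _ _ (fun x => hadd x h0) (fun x => hadd x h0) (fun x => @haddK r x h0)).
  rewrite -sumrN; apply: eq_big => h.
    apply/idP/idP => H; last exact: Gadd H h0G.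
    by rewrite -(haddK h h0); apply: Gadd H h0G.
  by move=> _; rewrite Delta_add chiDr Ec mulrN1.
apply/eqP; move/eqP: ES; rewrite -subr_eq0 opprK -mulr2n mulrn_eq0 /=.
by rewrite eq_sym.
Qed.

End Char.

Definition mu1 (x b : bool) : IS := if x then IS16 else if b then IShalf else IS0.
Definition ck (L x b : bool) (m : IS) : bool := (m == mu1 x b) && ~~ [&& L, x & b].
Definition phi (L x y : bool) (m : IS) : algC :=
  \sum_(b : bool) (if b && y then -1 else 1) * (ck L x b m)%:R.
Definition isL r (k : 'I_(r + r)) : bool := if split k is inl _ then true else false.
Definition Fk r (g h : hvec r) (k : 'I_(r + r)) (m : IS) : algC :=
  phi (isL k) (Delta g k) (Delta h k) m.

Lemma splitLP r (k : 'I_(r + r)) i : split k = inl i -> k = lshift r i.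
Proof. by move=> E; rewrite -(splitK k) E. Qed.

Lemma forall_nat (I : finType) (P : pred I) :
  ([forall k, P k])%:R = \prod_k (P k)%:R :> algC.
Proof.
case: (boolP [forall k, P k]) => [/forallP H | /forallPn [k Hk]].
  by rewrite big1 // => k _; rewrite H.
by rewrite (bigD1 k) //= (negbTE Hk) mul0r.
Qed.

Lemma eqISE x y : (x == y) = match x, y with
 | IS0, IS0 | IShalf, IShalf | IS16, IS16 => true | _, _ => false end.
Proof. by case: x; case: y => //=; apply/eqP. Qed.

Lemma vmulE r (a b : vec r) k : vmul a b k = a k && b k.
Proof. by rewrite ffunE. Qed.
Lemma dperpE r (a : vec r) k : dperp a k = ~~ a k.
Proof. by rewrite !ffunE. Qed.
Lemma muDE r (nu : {ffun 'I_(r + r) -> IS}) k : muD nu k = (nu k == IS16).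
Proof. by rewrite ffunE. Qed.
Lemma muCE r (nu : {ffun 'I_(r + r) -> IS}) k : muC nu k = (nu k == IShalf).
Proof. by rewrite ffunE. Qed.

Section Cond.
Variable r : nat.
Variable G : {set hvec r}.
Variable g : hvec r.
Variable nu : {ffun 'I_(r + r) -> IS}.

Lemma cond_forall a :
  cond g nu a && repc g a = [forall k, ck (isL k) (Delta g k) (a k) (nu k)].
Proof.
rewrite /cond /repc.
apply/idP/forallP.
  move=> /andP [/andP [/eqP Ed /eqP Ec] /forallP Hr] k.
  move/ffunP: Ed => /(_ k); move/ffunP: Ec => /(_ k).
  rewrite vmulE dperpE muDE muCE => Ec Ed.
  rewrite /ck; apply/andP; split.
    move: Ec Ed; rewrite /mu1; case: (Delta g k); case: (a k); case: (nu k);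
    by rewrite ?eqISE.
  rewrite /isL; case E: (split k) => [i|i] //=.
  move: (Hr i); rewrite -(splitLP E) DeltaE E.
  by case: (g i); case: (a k).
move=> H; apply/andP; split; first (apply/andP; split).
- apply/eqP/ffunP => k; move: (H k); rewrite /ck muDE /mu1.
  by case: (Delta g k); case: (a k); case: (nu k); rewrite ?eqISE.
- apply/eqP/ffunP => k; move: (H k); rewrite /ck vmulE dperpE muCE /mu1.
  by case: (Delta g k); case: (a k); case: (nu k); rewrite ?eqISE.
- apply/forallP => i; move: (H (lshift r i)); rewrite /ck /isL (unsplitK (inl i)) Delta_l.
  by case: (g i); case: (a _) => //; rewrite andbF.
Qed.

End Cond.

Section Zform.
Variable r : nat.
Variable G : {set hvec r}.
Variable eps : vec r -> vec r -> algC.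
Hypothesis Heps : eps_spec eps.
Hypothesis r0 : (0 < r)%N.
Hypothesis G0 : hzero r \in G.
Hypothesis Gadd : forall g h, g \in G -> h \in G -> hadd g h \in G.
Hypothesis G1 : hone r \in G.

Lemma card_Rset g nu :
  #|Rset G g nu|%:R = \sum_a (a \in CG G)%:R * (cond g nu a && repc g a)%:R :> algC.
Proof.
rewrite -sum1_card natr_sum big_mkcond /=; apply: eq_bigr => a _.
rewrite inE; case: (a \in CG G); case: (cond g nu a); case: (repc g a); by rewrite /= ?mulr1 ?mulr0 ?mul0r.
Qed.

Lemma Zform nu : ZG G eps nu =
  #|G|%:R^-1 * \sum_(g in G) \sum_(h in G) \prod_k Fk g h k (nu k).
Proof.
rewrite ffunE /dimS natr_sum /DG big_imset /=; last by move=> x y _ _; apply: Delta_inj.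
rewrite mulr_sumr; apply: eq_bigr => g gG.
rewrite (dimA_eq Heps r0 G1) card_Rset.
transitivity (\sum_(a : vec r) #|G|%:R^-1 *
   ((\sum_(h in G) chi a (Delta h)) * (cond g nu a && repc g a)%:R)).
  by apply: eq_bigr => a _; rewrite (charsum G0 Gadd) mulrA.
rewrite -mulr_sumr; congr (_ * _).
transitivity (\sum_(a : vec r) \sum_(h in G) chi a (Delta h) * (cond g nu a && repc g a)%:R).
  by apply: eq_bigr => a _; rewrite mulr_suml.
rewrite exchange_big /=; apply: eq_bigr => h hG.
rewrite /Fk /phi bigA_distr_bigA /=; apply: eq_bigr => a _.
rewrite cond_forall forall_nat /chi -big_split /=; apply: eq_bigr => k _.
by [].
Qed.

End Zform.

Definition Sf (f : IS -> algC) (n : IS) : algC := \sum_m Smat n m * f m.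

Lemma sumIS (F : IS -> algC) : \sum_m F m = F IS0 + F IShalf + F IS16.
Proof.
rewrite (bigD1 IS0) //= (bigD1 IShalf) ?eqISE //= (bigD1 IS16) ?eqISE //=.
rewrite big1 ?addr0 ?addrA //.
by case; rewrite !eqISE.
Qed.

Lemma Sf_ext f f' n : (forall m, f m = f' m) -> Sf f n = Sf f' n.
Proof. by move=> E; apply: eq_bigr => m _; rewrite E. Qed.

Definition fA (m : IS) : algC := match m with IS16 => 0 | _ => 1 end.
Definition fB (m : IS) : algC := match m with IS0 => 1 | IShalf => -1 | IS16 => 0 end.
Definition fC (m : IS) : algC := match m with IS16 => 1 | _ => 0 end.

Lemma phiA L m : phi L false false m = fA m.
Proof. rewrite /phi big_bool /ck; case: m; rewrite /= !eqISE /= ?andbF /=; try case: y; rewrite /=; ring. Qed.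
Lemma phiB L m : phi L false true m = fB m.
Proof. rewrite /phi big_bool /ck; case: m; rewrite /= !eqISE /= ?andbF /=; try case: y; rewrite /=; ring. Qed.
Lemma phiC y m : phi true true y m = fC m.
Proof. rewrite /phi big_bool /ck; case: m; rewrite /= !eqISE /= ?andbF /=; try case: y; rewrite /=; ring. Qed.
Lemma phiC2 m : phi false true false m = 2 * fC m.
Proof. rewrite /phi big_bool /ck; case: m; rewrite /= !eqISE /= ?andbF /=; try case: y; rewrite /=; ring. Qed.
Lemma phi0 m : phi false true true m = 0.
Proof. rewrite /phi big_bool /ck; case: m; rewrite /= !eqISE /= ?andbF /=; try case: y; rewrite /=; ring. Qed.

Lemma s2 : sqrtC 2 * sqrtC 2 = 2 :> algC.
Proof. by rewrite -expr2 sqrtCK. Qed.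
Lemma s0 : sqrtC 2 != 0 :> algC.
Proof. by rewrite sqrtC_eq0 pnatr_eq0. Qed.
Lemma two0 : 2 != 0 :> algC.
Proof. by rewrite pnatr_eq0. Qed.
Lemma tt2 : (sqrtC 2)^-1 * (sqrtC 2)^-1 = 2^-1 :> algC.
Proof. by rewrite -invfM s2. Qed.
Lemma two_t : 2 * (sqrtC 2)^-1 = sqrtC 2 :> algC.
Proof. by apply: (mulIf s0); rewrite -mulrA mulVf ?s0 // mulr1 s2. Qed.

Lemma SA n : Sf fA n = fA n.
Proof.
rewrite /Sf sumIS; case: n => /=; rewrite ?mulr1 ?mulr0 ?addr0.
- by field.
- by field.
- by rewrite subrr.
Qed.

Lemma SB n : Sf fB n = 2 * (sqrtC 2)^-1 * fC n.
Proof.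
by rewrite /Sf sumIS; case: n => /=; field; exact: s0.
Qed.

Lemma SC n : Sf fC n = (sqrtC 2)^-1 * fB n.
Proof.
by rewrite /Sf sumIS; case: n => /=; field; exact: s0.
Qed.

Lemma Sf2 f n : Sf (fun m => 2 * f m) n = 2 * Sf f n.
Proof. by rewrite /Sf mulr_sumr; apply: eq_bigr => m _; rewrite mulrCA. Qed.

Lemma Sf0 n : Sf (fun _ => 0) n = 0.
Proof. by rewrite /Sf big1 // => m _; rewrite mulr0. Qed.

Lemma pair_lemma x y nl nr :
  Sf (phi true x y) nl * Sf (phi false x y) nr = phi true y x nl * phi false y x nr.
Proof.
case: x; case: y.
- by rewrite (Sf_ext _ (phiC true)) (Sf_ext _ phi0) phiC phi0 Sf0 !mulr0.
- rewrite (Sf_ext _ (phiC false)) (Sf_ext _ phiC2) phiB phiB Sf2 !SC.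
  transitivity (((sqrtC 2)^-1 * (sqrtC 2)^-1) * 2 * (fB nl * fB nr)); first by ring.
  by rewrite tt2 mulVf ?two0 // mul1r.
- rewrite (Sf_ext _ (phiB true)) (Sf_ext _ (phiB false)) phiC phiC2 !SB.
  transitivity (((sqrtC 2)^-1 * (sqrtC 2)^-1) * 2 * 2 * (fC nl * fC nr)); first by ring.
  by rewrite tt2 mulVf ?two0 // mul1r mulrCA.
- by rewrite (Sf_ext _ (phiA true)) (Sf_ext _ (phiA false)) phiA phiA !SA.
Qed.

Lemma Fk_l r (g h : hvec r) i m : Fk g h (lshift r i) m = phi true (g i) (h i) m.
Proof. by rewrite /Fk /isL (unsplitK (inl i)) !Delta_l. Qed.
Lemma Fk_r r (g h : hvec r) i m : Fk g h (rshift r i) m = phi false (g i) (h i) m.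
Proof. by rewrite /Fk /isL (unsplitK (inr i)) !Delta_r. Qed.

Lemma prod_swap r (g h : hvec r) (nu : {ffun 'I_(r + r) -> IS}) :
  \prod_k Sf (Fk g h k) (nu k) = \prod_k Fk h g k (nu k).
Proof.
rewrite !big_split_ord /=.
transitivity (\prod_(i < r) (Sf (Fk g h (lshift r i)) (nu (lshift r i)) *
   Sf (Fk g h (rshift r i)) (nu (rshift r i)))); first by rewrite big_split.
transitivity (\prod_(i < r) (Fk h g (lshift r i) (nu (lshift r i)) *
   Fk h g (rshift r i) (nu (rshift r i)))); last by rewrite big_split.
apply: eq_bigr => i _.
by rewrite (Sf_ext _ (Fk_l g h i)) (Sf_ext _ (Fk_r g h i)) Fk_l Fk_r pair_lemma.
Qed.

Unset Implicit Arguments.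
Theorem mainTheorem15 (r : nat) (G : {set hvec r})
  (eps : vec r -> vec r -> algC) :
  (0 < r)%N ->
  hzero r \in G ->
  (forall g h, g \in G -> h \in G -> hadd g h \in G) ->
  hone r \in G ->
  eps_spec eps ->
  Stens (ZG G eps) = ZG G eps.
Proof.
move=> r0 G0 Gadd G1 Heps.
apply/ffunP => nu; rewrite ffunE (Zform Heps r0 G0 Gadd G1).
set c := #|G|%:R^-1.
transitivity (c * \sum_(g in G) \sum_(h in G) \sum_(mu : {ffun 'I_(r + r) -> IS})
    \prod_k (Smat (nu k) (mu k) * Fk g h k (mu k))).
  under eq_bigr => mu _ do rewrite (Zform Heps r0 G0 Gadd G1) mulrCA.
  rewrite -mulr_sumr; congr (_ * _).
  under eq_bigr => mu _ do rewrite mulr_sumr.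
  rewrite exchange_big /=; apply: eq_bigr => g gG.
  under eq_bigr => mu _ do rewrite mulr_sumr.
  rewrite exchange_big /=; apply: eq_bigr => h hG.
  by apply: eq_bigr => mu _; rewrite big_split.
congr (_ * _).
transitivity (\sum_(g in G) \sum_(h in G) \prod_k Fk h g k (nu k)); last first.
  by rewrite exchange_big.
apply: eq_bigr => g gG; apply: eq_bigr => h hG.
by rewrite -prod_swap /Sf bigA_distr_bigA.
Qed.
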